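(* Let $\alpha>0$, $\alpha\ne1$, let $U\in\mathcal{U}(d)$ and let $\Phi(Y)=UYU^\dagger$ be the corresponding unitary channel, with Choi state $\rho_\Phi=\frac1d\sum_{i,j=0}^{d-1}\Phi(|i\rangle\langle j|)\otimes|i\rangle\langle j|$ on $\mathbb{C}^d\otimes\mathbb{C}^d$. Then $H_\alpha(U)=\frac{1}{\alpha-1}\big(1-e^{-(\alpha-1)M_\alpha(\rho_\Phi)}\big)$.
   Context: Let $d_L\ge 2$, $n\ge1$, $d=d_L^n$, with computational basis $\{|i\rangle\}$ of $\mathbb{C}^d$. On $\mathbb{C}^{d_L}$ let $Z|k\rangle=\omega^k|k\rangle$, $X|k\rangle=|k+1\rangle$ (mod $d_L$), $\omega=e^{2\pi i/d_L}$, $\tau=-e^{i\pi/d_L}$, $D_{(a_1,a_2)}=\tau^{a_1a_2}X^{a_1}Z^{a_2}$, and for $\mathbf a=\mathbf a_1\oplus\cdots\oplus\mathbf a_n\in\mathbb{Z}_{d_L}^{2n}$ let $D_{\mathbf a}=D_{\mathbf a_1}\otimes\cdots\otimes D_{\mathbf a_n}$. The $\alpha$-Clifford entropy of $U$ is $H_\alpha(U)=\frac{1}{\alpha-1}\Big(1-\frac{1}{d^2}\sum_{\mathbf a,\mathbf b}\big|\tfrac1d\operatorname{tr}(D_{\mathbf a}^\dagger UD_{\mathbf b}U^\dagger)\big|^{2\alpha}\Big)$. For a pure state $\rho$ on $\mathbb{C}^d\otimes\mathbb{C}^d$, define $\chi_{\mathbf{ab}}(\rho)=\frac{1}{d^2}\big|\operatorname{tr}\big((D_{\mathbf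 a}^\dagger\otimes D_{\mathbf b}^\dagger)\rho\big)\big|^2$ (a probability distribution over $(\mathbf a,\mathbf b)$) and the (bipartite) stabilizer Rényi entropy $M_\alpha(\rho)=\frac{1}{1-\alpha}\ln\sum_{\mathbf a,\mathbf b}\chi_{\mathbf{ab}}(\rho)^\alpha-\ln(d^2)$. *)

(* Defs.v *)
From HB Require Import structures.
From mathcomp Require Import all_boot all_order all_algebra.
From mathcomp Require Import complex mxtens.
From mathcomp Require Import reals sequences exp trigo.
Set Implicit Arguments.
Unset Strict Implicit.
Unset Printing Implicit Defensive.
Import Order.TTheory GRing.Theory Num.Theory.
Local Open Scope ring_scope.

Section CliffordDefs.
Variable R : realType.
Local Notation C := (R[i]).

Definition cexpi (t : R) : C := Complex (cos t) (sin t).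

Definition omega (dL : nat) : C := cexpi (2 * pi / dL%:R).
Definition tau (dL : nat) : C := - cexpi (pi / dL%:R).

Definition shiftX (dL : nat) : 'M[C]_dL :=
  \matrix_(i, j) ((nat_of_ord i == (j.+1 %% dL)%N)%:R).
Definition clockZ (dL : nat) : 'M[C]_dL :=
  \matrix_(i, j) ((i == j)%:R * omega dL ^+ j).

Fixpoint mxpow (m : nat) (A : 'M[C]_m) (k : nat) : 'M[C]_m :=
  match k with 0 => 1%:M | k'.+1 => A *m mxpow A k' end.

Definition weyl1 (dL : nat) (a : 'I_dL * 'I_dL) : 'M[C]_dL :=
  tau dL ^+ (a.1 * a.2) *: (mxpow (shiftX dL) a.1 *m mxpow (clockZ dL) a.2).

Fixpoint weyl_seq (dL : nat) (s : seq ('I_dL * 'I_dL)) : 'M[C]_(dL ^ size s) :=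
  match s return 'M[C]_(dL ^ size s) with
  | [::] => castmx (esym (expn0 dL), esym (expn0 dL)) 1%:M
  | x :: s' => castmx (esym (expnS dL (size s')), esym (expnS dL (size s')))
                      (weyl1 x *t weyl_seq s')
  end.

(* D_a for a = a_1 (+) ... (+) a_n in Z_dL^{2n}, a_k = (a_{k,1}, a_{k,2}) *)
Definition weyl (dL n : nat) (a : n.-tuple ('I_dL * 'I_dL)) : 'M[C]_(dL ^ n) :=
  castmx (congr1 (expn dL) (size_tuple a), congr1 (expn dL) (size_tuple a))
         (weyl_seq (tval a)).

Definition cabs (z : C) : R := @complex.Re R `|z|.

Definition adjmx (m p : nat) (A : 'M[C]_(m, p)) : 'M[C]_(p, m) :=
  (map_mx (fun z => z^*) A)^T.

Definition unitary (m : nat) (U : 'M[C]_m) := U *m adjmx U = 1%:M.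

Definition clifford_entropy (dL n : nat) (alpha : R) (U : 'M[C]_(dL ^ n)) : R :=
  let d := (dL ^ n)%N in
  (alpha - 1)^-1 *
  (1 - (d%:R ^+ 2)^-1 *
       \sum_(a : n.-tuple ('I_dL * 'I_dL)) \sum_(b : n.-tuple ('I_dL * 'I_dL))
          powR (cabs ((d%:R)^-1 *
                 \tr (adjmx (weyl a) *m U *m weyl b *m adjmx U))) (2 * alpha)).

Definition chi (dL n : nat) (rho : 'M[C]_(dL ^ n * dL ^ n))
    (a b : n.-tuple ('I_dL * 'I_dL)) : R :=
  ((dL ^ n)%:R ^+ 2)^-1 *
  cabs (\tr ((adjmx (weyl a) *t adjmx (weyl b)) *m rho)) ^+ 2.

Definition stab_renyi (dL n : nat) (alpha : R) (rho : 'M[C]_(dL ^ n * dL ^ n)) : R :=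
  (1 - alpha)^-1 *
    ln (\sum_(a : n.-tuple ('I_dL * 'I_dL)) \sum_(b : n.-tuple ('I_dL * 'I_dL))
          powR (chi rho a b) alpha)
  - ln (((dL ^ n)%:R : R) ^+ 2).

Definition choi (m : nat) (U : 'M[C]_m) : 'M[C]_(m * m) :=
  (m%:R)^-1 *: \sum_(i < m) \sum_(j < m)
     ((U *m delta_mx i j *m adjmx U) *t delta_mx i j).

End CliffordDefs.

(* Main.v *)
Require Import Defs.
From HB Require Import structures.
From mathcomp Require Import all_boot all_order all_algebra.
From mathcomp Require Import complex mxtens.
From mathcomp Require Import reals sequences exp trigo.
From mathcomp Require Import ring.
Import Order.TTheory GRing.Theory Num.Theory.
Local Open Scope ring_scope.

Section AuxA.
Variable R : realType.
Local Notation C := (R[i]).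

Lemma tr_tens m p (A : 'M[C]_m) (B : 'M[C]_p) : \tr (A *t B) = \tr A * \tr B.
Proof. by rewrite /mxtrace mulr_sum; apply: eq_bigr => k _; rewrite mxE. Qed.

Lemma tr_delta m (M : 'M[C]_m) i j : \tr (M *m delta_mx i j) = M j i.
Proof.
rewrite /mxtrace (bigD1 j) //= big1 => [|k nkj]; last first.
  rewrite mxE big1 // => l _; rewrite mxE (negbTE nkj) andbF mulr0 //.
rewrite mxE (bigD1 i) //= big1 => [|l nli]; first by rewrite !mxE !eqxx mulr1 !addr0.
by rewrite mxE (negbTE nli) mulr0.
Qed.

Lemma trace_choi m (A B U : 'M[C]_m) :
  \tr ((A *t B) *m choi U) = m%:R^-1 * \tr (A *m U *m B^T *m adjmx U).
Proof.
rewrite /choi -scalemxAr mxtraceZ; congr (_ * _).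
rewrite mulmx_sumr raddf_sum /=.
under eq_bigr => i _ do rewrite mulmx_sumr raddf_sum /=.
under eq_bigr => i _ do under eq_bigr => j _ do
  rewrite tensmx_mul tr_tens !mulmxA mxtrace_mulC !mulmxA tr_delta tr_delta.
rewrite mxtrace_mulC !mulmxA /mxtrace exchange_big /=.
apply: eq_bigr => j _; rewrite mxE; apply: eq_bigr => i _.
by rewrite !mxE.
Qed.

End AuxA.

Set Implicit Arguments.
Unset Strict Implicit.
Unset Printing Implicit Defensive.

Section Aux.
Variable R : realType.
Local Notation C := (R[i]).

Definition conjm m p (M : 'M[C]_(m, p)) : 'M[C]_(m, p) := map_mx (fun z => z^*) M.

Lemma norm_cexpi (t : R) : `|cexpi t| = 1.
Proof.
by rewrite normc_def /= cos2Dsin2 sqrtr1.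
Qed.

Lemma cexpiD (s t : R) : cexpi s * cexpi t = cexpi (s + t).
Proof.
rewrite /cexpi cosD sinD; apply/eqP; rewrite eq_complex /=; apply/andP; split; apply/eqP.
  by [].
by rewrite addrC.
Qed.

Lemma cexpiX (t : R) k : cexpi t ^+ k = cexpi (t *+ k).
Proof.
elim: k => [|k IH].
  by rewrite expr0 mulr0n /cexpi cos0 sin0.
by rewrite exprS IH cexpiD mulrS.
Qed.

End Aux.
Section Aux2.
Variable R : realType.
Local Notation C := (R[i]).

Lemma conjmM m n p (A : 'M[C]_(m, n)) (B : 'M[C]_(n, p)) : conjm (A *m B) = conjm A *m conjm B.
Proof. by rewrite /conjm map_mxM. Qed.

Lemma conjmZ m n (a : C) (A : 'M[C]_(m, n)) : conjm (a *: A) = a^* *: conjm A.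
Proof. by apply/matrixP => i j; rewrite !mxE rmorphM. Qed.

Lemma conjm1 m : conjm (1%:M : 'M[C]_m) = 1%:M.
Proof. by rewrite /conjm map_mx1. Qed.

Lemma conjm_cast m n m' n' (e : (m = m') * (n = n')) (A : 'M[C]_(m, n)) :
  conjm (castmx e A) = castmx e (conjm A).
Proof. by rewrite /conjm map_castmx. Qed.

Lemma conjm_tens m n p q (A : 'M[C]_(m, n)) (B : 'M[C]_(p, q)) :
  conjm (A *t B) = conjm A *t conjm B.
Proof. by apply/matrixP => i j; rewrite !mxE rmorphM. Qed.

Lemma tensZZ m n p q a b (A : 'M[C]_(m, n)) (B : 'M[C]_(p, q)) :
  (a *: A) *t (b *: B) = (a * b) *: (A *t B).
Proof. by apply/matrixP => i j; rewrite !mxE mulrACA. Qed.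

Lemma castmxZ m n m' n' (e : (m = m') * (n = n')) a (A : 'M[C]_(m, n)) :
  castmx e (a *: A) = a *: castmx e A.
Proof. by apply/matrixP => i j; rewrite castmxE !mxE castmxE. Qed.

Lemma tens_castr m p q (e : p = q) (A : 'M[C]_m) (B : 'M[C]_p) :
  A *t castmx (e, e) B = castmx (f_equal (muln m) e, f_equal (muln m) e) (A *t B).
Proof. by case: q / e; rewrite !castmx_id. Qed.

Lemma conjm_mxpow m (A : 'M[C]_m) k : conjm (mxpow A k) = mxpow (conjm A) k.
Proof. by elim: k => [|k IH] /=; rewrite ?conjm1 // conjmM IH. Qed.

End Aux2.
Section Aux3.
Variable R : realType.
Local Notation C := (R[i]).

Lemma conjm_shiftX dL : conjm (shiftX R dL) = shiftX R dL.
Proof. by apply/matrixP => i j; rewrite !mxE conjC_nat. Qed.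

Lemma mxpowS m (A : 'M[C]_m) k : mxpow A k.+1 = A *m mxpow A k.
Proof. by []. Qed.
Lemma mxpow0 m (A : 'M[C]_m) : mxpow A 0 = 1%:M.
Proof. by []. Qed.

Lemma mxpow_diag m (f : 'I_m -> C) k :
  mxpow (\matrix_(i, j) ((i == j)%:R * f j)) k = \matrix_(i, j) ((i == j)%:R * f j ^+ k).
Proof.
elim: k => [|k IH].
  by rewrite mxpow0; apply/matrixP => i j; rewrite !mxE expr0 mulr1.
rewrite mxpowS IH; apply/matrixP => i j; rewrite !mxE (bigD1 i) //= big1 => [|l nl]; last first.
  by rewrite !mxE; case: (i =P l) => [e|_]; [move: nl; rewrite e eqxx | rewrite !mul0r].
rewrite !mxE eqxx mul1r addr0; case: eqP => [->|_]; last by rewrite !mul0r mulr0.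
by rewrite !mul1r exprS.
Qed.

Lemma conjm_clockZ dL : conjm (clockZ R dL) = \matrix_(i, j) ((i == j)%:R * (omega R dL)^* ^+ j).
Proof. by apply/matrixP => i j; rewrite !mxE rmorphM rmorph_nat rmorphXn. Qed.

Lemma norm_omega dL : `|omega R dL| = 1.
Proof. exact: norm_cexpi. Qed.

Lemma norm_tau dL : `|tau R dL| = 1.
Proof. by rewrite normrN norm_cexpi. Qed.

Lemma omega_dL dL : (0 < dL)%N -> omega R dL ^+ dL = 1.
Proof.
move=> hd; rewrite /omega cexpiX.
have -> : 2 * pi / dL%:R *+ dL = pi *+ 2 :> R.
  by rewrite -[_ *+ dL]mulr_natr divfK ?pnatr_eq0 -?lt0n // mulr_natl.
rewrite /cexpi sin2pi -[pi *+ 2]add0r cosD2pi cos0 //.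
Qed.

Lemma conj_pow_neg (w : C) dL a : `|w| = 1 -> w ^+ dL = 1 -> (a < dL)%N ->
  (w^*) ^+ a = w ^+ ((dL - a) %% dL).
Proof.
move=> hw hd ha.
have w0 : w != 0 by rewrite -normr_eq0 hw oner_eq0.
have hc : w^* * w = 1 by rewrite -normCKC hw expr1n.
apply: (mulIf (expf_neq0 a w0)); rewrite -exprMn hc expr1n -exprD.
case: (posnP a) => [->|a0]; first by rewrite subn0 modnn.
rewrite modn_small ?subnK //; [exact: ltnW | by rewrite ltn_subrL a0 (leq_ltn_trans (leq0n a) ha)].
Qed.

End Aux3.
Section Aux4.
Variable R : realType.
Local Notation C := (R[i]).

Definition negI dL (a : 'I_dL) : 'I_dL :=
  Ordinal (ltn_pmod (dL - a) (leq_ltn_trans (leq0n a) (ltn_ord a))).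
Definition gW dL (x : 'I_dL * 'I_dL) := (x.1, negI x.2).

Lemma negIK dL : involutive (@negI dL).
Proof.
move=> a; apply: val_inj => /=.
have hd : (0 < dL)%N := leq_ltn_trans (leq0n a) (ltn_ord a).
case: (posnP a) => [a0|a0]; first by rewrite a0 subn0 modnn subn0 modnn.
rewrite (modn_small (m := dL - a)); last by rewrite ltn_subrL a0 hd.
by rewrite subKn ?modn_small // ltnW.
Qed.

Lemma gWK dL : involutive (@gW dL).
Proof. by case=> a b; rewrite /gW /= negIK. Qed.

Lemma conj_weyl1 dL (x : 'I_dL * 'I_dL) :
  exists c : C, `|c| = 1 /\ conjm (weyl1 R x) = c *: weyl1 R (gW x).
Proof.
case: x => a1 a2.
have hd : (0 < dL)%N := leq_ltn_trans (leq0n a2) (ltn_ord a2).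
rewrite /weyl1 /= conjmZ conjmM !conjm_mxpow conjm_shiftX.
have -> : mxpow (conjm (clockZ R dL)) a2 = mxpow (clockZ R dL) (negI a2).
  rewrite conjm_clockZ /clockZ !mxpow_diag; apply/matrixP=> i j; rewrite !mxE; congr (_ * _).
  have -> : (omega R dL)^* ^+ j = (omega R dL ^+ j)^* by rewrite rmorphXn.
  apply: conj_pow_neg; first by rewrite normrX norm_omega expr1n.
    by rewrite -exprM mulnC exprM omega_dL // expr1n.
  exact: ltn_ord.
have t0 : tau R dL != 0 by rewrite -normr_eq0 norm_tau oner_eq0.
exists ((tau R dL ^+ (a1 * a2))^* / tau R dL ^+ (a1 * negI a2)); split.
  by rewrite normrM normfV norm_conjC !normrX norm_tau !expr1n invr1 mulr1.
by rewrite scalerA divfK // expf_neq0.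
Qed.

End Aux4.
Section Aux5.
Variable R : realType.
Local Notation C := (R[i]).

Lemma conj_weyl_seq dL (s : seq ('I_dL * 'I_dL)) : exists c : C, `|c| = 1 /\
  conjm (weyl_seq R s) =
  c *: castmx (congr1 (expn dL) (size_map (@gW dL) s), congr1 (expn dL) (size_map (@gW dL) s))
          (weyl_seq R (map (@gW dL) s)).
Proof.
elim: s => [|x s [c [hc IH]]].
  exists 1; split; first by rewrite normr1.
  by rewrite /= scale1r conjm_cast conjm1 castmx_comp; apply: eq_castmx.
have [c1 [hc1 E1]] := conj_weyl1 R x.
exists (c1 * c); split; first by rewrite normrM hc1 hc mulr1.
rewrite /= conjm_cast conjm_tens E1 IH tensZZ tens_castr !castmxZ !castmx_comp.
by congr (_ *: _); apply: eq_castmx.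
Qed.

Lemma conj_weyl dL n (b : n.-tuple ('I_dL * 'I_dL)) : exists c : C, `|c| = 1 /\
  conjm (weyl R b) = c *: weyl R (map_tuple (@gW dL) b).
Proof.
have [c [hc E]] := conj_weyl_seq (tval b).
exists c; split => //.
rewrite /weyl conjm_cast E castmxZ castmx_comp; congr (_ *: _).
by apply: eq_castmx.
Qed.

End Aux5.

Section Aux6.
Variable R : realType.
Local Notation C := (R[i]).

Lemma castmx1 m m' (e1 e2 : m = m') : castmx (e1, e2) (1%:M : 'M[C]_m) = 1%:M.
Proof.
by move: e2; case: m' / e1 => e2; rewrite (eq_irrelevance e2 erefl) castmx_id.
Qed.

Lemma tens11 m p : (1%:M : 'M[C]_m) *t (1%:M : 'M[C]_p) = 1%:M.
Proof.
apply/matrixP => i j.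
case: (mxtens_indexP i) => i1 i2; case: (mxtens_indexP j) => j1 j2.
rewrite tensmxE !mxE (inj_eq (can_inj (@mxtens_indexK m p))) xpair_eqE.
by case: (i1 == j1); case: (i2 == j2); rewrite ?mulr1 ?mul0r ?mulr0.
Qed.

Lemma weyl1_0 dL (x : 'I_dL * 'I_dL) : nat_of_ord x.1 = 0%N -> nat_of_ord x.2 = 0%N ->
  weyl1 R x = 1%:M.
Proof.
by move=> h1 h2; rewrite /weyl1 h1 h2 /= expr0 scale1r mul1mx.
Qed.

Lemma weyl_seq0 dL (s : seq ('I_dL * 'I_dL)) :
  all (fun x => (nat_of_ord x.1 == 0%N) && (nat_of_ord x.2 == 0%N)) s ->
  weyl_seq R s = 1%:M.
Proof.
elim: s => [|x s IH] /=; first by rewrite castmx1.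
case/andP => /andP [/eqP h1 /eqP h2] hs.
by rewrite weyl1_0 // IH // tens11 castmx1.
Qed.

Lemma weyl0 dL n (hd : (0 < dL)%N) :
  weyl R (nseq_tuple n (Ordinal hd, Ordinal hd)) = 1%:M.
Proof.
rewrite /weyl weyl_seq0 ?castmx1 //.
by rewrite /= all_nseq /= orbT.
Qed.

End Aux6.

Unset Implicit Arguments.
Set Strict Implicit.

Lemma cabs_ge0 (R : realType) (z : R[i]) : 0 <= cabs z.
Proof.
by move: (normr_ge0 z); rewrite lecE => /andP [_ h].
Qed.

Lemma cabsM1 (R : realType) (x c t : R[i]) : `|c| = 1 -> cabs (x * (c * t)) = cabs (x * t).
Proof. by move=> hc; rewrite /cabs !normrM hc mul1r. Qed.

Lemma adjT (R : realType) m (B : 'M[R[i]]_m) : (adjmx B)^T = conjm B.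
Proof. by rewrite /adjmx trmxK. Qed.

Lemma adj1 (R : realType) m : adjmx (1%:M : 'M[R[i]]_m) = 1%:M.
Proof. by rewrite /adjmx map_mx1 trmx1. Qed.

Theorem theorem4 (R : realType) (dL n : nat) (alpha : R)
    (U : 'M[R[i]]_(dL ^ n)) :
  (2 <= dL)%N -> (1 <= n)%N ->
  0 < alpha -> alpha != 1 ->
  unitary U ->
  clifford_entropy alpha U =
    (alpha - 1)^-1 * (1 - expR (- (alpha - 1) * stab_renyi alpha (choi U))).
Proof.
move=> hdL hn ha ha1 hU.
have hdL0 : (0 < dL)%N by apply: leq_trans hdL.
set d := (dL ^ n)%N.
have hd : (0 < d)%N by rewrite expn_gt0 hdL0.
set T := fun a b : n.-tuple ('I_dL * 'I_dL) =>
  cabs ((d%:R : R[i])^-1 * \tr (adjmx (weyl R a) *m U *m weyl R b *m adjmx U)).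
set h := map_tuple (@gW dL) : n.-tuple ('I_dL * 'I_dL) -> n.-tuple ('I_dL * 'I_dL).
have hinv : involutive h.
  move=> t; apply: val_inj => /=; rewrite -map_comp (eq_map (@gWK dL)) map_id //.
have hinj : injective h := inv_inj hinv.
have chiE : forall a b, chi (choi U) a b = ((d%:R : R) ^+ 2)^-1 * T a (h b) ^+ 2.
  move=> a b; rewrite /chi trace_choi adjT.
  have [c [hc ->]] := conj_weyl R b.
  by rewrite -scalemxAr -scalemxAl mxtraceZ cabsM1.
set dR := (d%:R : R).
have dR0 : 0 < dR by rewrite ltr0n.
set S := \sum_(a : n.-tuple ('I_dL * 'I_dL)) \sum_(b : n.-tuple ('I_dL * 'I_dL))
           powR (T a b) (2 * alpha).
have sumE : \sum_(a : n.-tuple ('I_dL * 'I_dL)) \sum_(b : n.-tuple ('I_dL * 'I_dL))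
     powR (chi (choi U) a b) alpha = powR ((dR ^+ 2)^-1) alpha * S.
  rewrite mulr_sumr; apply: eq_bigr => a _; rewrite mulr_sumr [RHS](reindex_inj hinj).
  apply: eq_bigr => b _.
  rewrite chiE powRM ?invr_ge0 ?exprn_ge0 ?cabs_ge0 //.
  by rewrite -[T a (h b) ^+ 2]powR_mulrn ?cabs_ge0 // -powRrM.
set z := nseq_tuple n (Ordinal hdL0, Ordinal hdL0).
have Tzz : T z z = 1.
  rewrite /T weyl0 adj1 mul1mx mulmx1 hU mxtrace1 mulVf ?pnatr_eq0 -?lt0n //.
  by rewrite /cabs normr1.
have hz : forall F : n.-tuple ('I_dL * 'I_dL) -> R, (forall i, 0 <= F i) -> F z <= \sum_i F i.
  move=> F F0; rewrite (bigD1 z) // lerDl; exact: sumr_ge0.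
have S1 : 1 <= S.
  rewrite /S; apply: le_trans (hz _ _); last by move=> a; apply: sumr_ge0 => b _; exact: powR_ge0.
  apply: le_trans (hz _ _); last by move=> b; exact: powR_ge0.
  by rewrite Tzz powR1.
have S0 : 0 < S by apply: lt_le_trans S1.
have LHS : clifford_entropy alpha U = (alpha - 1)^-1 * (1 - (dR ^+ 2)^-1 * S) by [].
have stabE : stab_renyi alpha (choi U) =
   (1 - alpha)^-1 * ln (powR ((dR ^+ 2)^-1) alpha * S) - ln (dR ^+ 2).
  by rewrite /stab_renyi sumE.
rewrite LHS stabE; congr (_ * (1 - _)).
have P0 : 0 < powR ((dR ^+ 2)^-1) alpha by rewrite powR_gt0 // invr_gt0 exprn_gt0.
have D0 : 0 < dR ^+ 2 by rewrite exprn_gt0.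
rewrite lnM ?posrE // ln_powR lnV ?posrE //.
have h1 : 1 - alpha != 0 by rewrite subr_eq0 eq_sym.
have -> : - (alpha - 1) * ((1 - alpha)^-1 * (alpha * - ln (dR ^+ 2) + ln S) - ln (dR ^+ 2))
   = ln S - ln (dR ^+ 2).
  rewrite opprB mulrBr mulrA mulfV // mul1r; ring.
by rewrite expRD expRN lnK ?posrE // lnK ?posrE // mulrC.
Qed.
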